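(* Let $f,g\in Sym$ be symmetric functions of degree at most a positive integer $n$. If $f[\Xi_\mu]=g[\Xi_\mu]$ for all partitions $\mu$ with $|\mu|\ge n$, then $f=g$ in $Sym$.
   Context: $Sym=\mathbb{Q}[p_1,p_2,\ldots]$ graded by $\deg p_k=k$. For $f\in Sym$ and a partition $\mu$, $f[\Xi_\mu]$ denotes $f$ evaluated at the multiset of eigenvalues of a permutation matrix of cycle type $\mu$, i.e. substituting $p_k\mapsto\sum_{d\mid k}d\,m_d(\mu)$, with $m_d(\mu)$ the number of parts of $\mu$ equal to $d$. *)

(* Defs.v *)
From HB Require Import structures.
From mathcomp Require Import all_boot all_order all_algebra.
From mathcomp Require Import mpoly.
Set Implicit Arguments. Unset Strict Implicit. Unset Printing Implicit Defensive.
Import GRing.Theory.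
Local Open Scope ring_scope.

(* Sym = Q[p_1,p_2,...].  An element lies in Q[p_1,...,p_N] for some N;
   we model it as {mpoly rat[N]}, where the variable 'X_i (i : 'I_N)
   stands for the power sum p_(i+1). *)

Definition wdeg (N : nat) (m : 'X_{1..N}) : nat :=
  (\sum_(i < N) i.+1 * m i)%N.

Definition sym_deg_le (N : nat) (f : {mpoly rat[N]}) (n : nat) : Prop :=
  forall m : 'X_{1..N}, m \in msupp f -> (wdeg m <= n)%N.

Definition is_partition (mu : seq nat) : bool :=
  sorted geq mu && all (fun x => 0 < x)%N mu.

Definition psize (mu : seq nat) : nat := sumn mu.

Definition mult (mu : seq nat) (d : nat) : nat := count_mem d mu.

(* value of p_k at the eigenvalues of a permutation matrix of cycle type mu:
   sum_{d | k} d * m_d(mu) *)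
Definition p_at_Xi (mu : seq nat) (k : nat) : rat :=
  (\sum_(d <- divisors k) (d * mult mu d)%N%:R).

Definition eval_Xi (N : nat) (f : {mpoly rat[N]}) (mu : seq nat) : rat :=
  f.@[fun i : 'I_N => p_at_Xi mu i.+1].

(* Main.v *)
Require Import Defs.
From HB Require Import structures.
From mathcomp Require Import all_boot all_order all_algebra.
From mathcomp Require Import mpoly.
Import GRing.Theory.
Import Num.Theory.
Local Open Scope ring_scope.

Lemma widen_lift n (j : 'I_n) : widen_ord (leqnSn n) j = lift ord_max j.
Proof. by apply/val_inj; rewrite /= /bump leqNgt ltn_ord. Qed.

Lemma grid_zero (R : idomainType) (P : R -> Prop)
  (HP : forall k, exists s : seq R, [/\ uniq s, size s = k & forall x, x \in s -> P x]) :
  forall n (p : {mpoly R[n]}),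
  (forall v : 'I_n -> R, (forall i, P (v i)) -> p.@[v] = 0) -> p = 0.
Proof.
elim=> [|n IH] p Hp.
  have m0 : forall m : 'X_{1..0}, m = 0%MM by move=> m; apply/mnmP => -[].
  have hv : forall i : 'I_0, P ((fun _ => 0) i) by case.
  have := Hp _ hv; rewrite mevalE => H0.
  rewrite (mpolyE p) (eq_bigr (fun m => p@_m *: 1)); last first.
    by move=> m _; rewrite (m0 m) mpolyX0.
  rewrite -scaler_suml -[RHS](scale0r (1 : {mpoly R[0]})); congr (_ *: _).
  by rewrite -[RHS]H0; apply: eq_bigr => m _; rewrite big_ord0 mulr1.
pose mw (m : 'X_{1..n.+1}) : 'X_{1..n} := [multinom m (widen_ord (leqnSn n) i) | i < n].
pose c k := \sum_(m <- msupp p | m ord_max == k) p@_m *: 'X_[mw m].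
have c0 : forall k, c k = 0.
  move=> k; apply: IH => v' Hv'.
  pose Q : {poly R} := \sum_(m <- msupp p)
     (p@_m * \prod_(i < n) v' i ^+ m (widen_ord (leqnSn n) i)) *: 'X^(m ord_max).
  have Q0 : Q = 0.
    apply/eqP; apply/negPn/negP => nQ.
    have [s [us ss Ps]] := HP (size Q).
    suff : (size s < size Q)%N by rewrite ss ltnn.
    apply: max_poly_roots => //; apply/allP => x xs; rewrite /root.
    pose vx (i : 'I_n.+1) := if unlift ord_max i is Some j then v' j else x.
    have -> : Q.[x] = p.@[vx].
      rewrite mevalE /Q horner_sum; apply: eq_bigr => m _.
      rewrite hornerZ hornerXn big_ord_recr /= -mulrA; congr (_ * (_ * _)).
        by apply: eq_bigr => i _; rewrite /vx widen_lift liftK.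
      by rewrite /vx unlift_none.
    rewrite (Hp vx) // => i; rewrite /vx; case: (unlift _ _) => [j|] //.
    exact: Ps.
  have := congr1 (fun q : {poly R} => q`_k) Q0.
  rewrite coef0 /Q coef_sum => <-.
  rewrite /c raddf_sum /= big_mkcond /=; apply: eq_bigr => m _.
  rewrite coefZ coefXn eq_sym; case: eqP => _ /=; last by rewrite mulr0.
  rewrite mulr1 mevalZ mevalX; congr (_ * _); apply: eq_bigr => i _.
  by rewrite mnmE.
apply/mpolyP => m0; rewrite mcoeff0.
have [m0s|] := boolP (m0 \in msupp p); last exact: memN_msupp_eq0.
have := congr1 (mcoeff (mw m0)) (c0 (m0 ord_max)).
rewrite mcoeff0 /c raddf_sum /= -big_filter (bigD1_seq m0) /=; first last.
- by rewrite filter_uniq // msupp_uniq.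
- by rewrite mem_filter eqxx m0s.
rewrite mcoeffZ mcoeffX eqxx mulr1 big1_seq ?addr0 // => m /andP [ne].
rewrite mem_filter => /andP [/eqP eqmax _].
rewrite mcoeffZ mcoeffX; case: eqP => [eqmw|]; last by rewrite mulr0.
exfalso; move/eqP: ne; apply; apply/mnmP => i.
have [->|nei] := eqVneq i ord_max; first by [].
have hi : (i < n)%N by rewrite ltn_neqAle -ltnS ltn_ord andbT; apply: contra nei => /eqP h; apply/eqP/val_inj.
have := congr1 (fun mm : 'X_{1..n} => mm (Ordinal hi)) eqmw.
rewrite /mw !mnmE; have -> // : widen_ord (leqnSn n) (Ordinal hi) = i by apply: val_inj.
Qed.

Lemma nat_seq (k : nat) : exists s : seq rat,
  [/\ uniq s, size s = k & forall x, x \in s -> exists j : nat, x = j%:R].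
Proof.
exists (map (fun i => i%:R) (iota 0 k)); split.
- rewrite map_inj_uniq ?iota_uniq // => a b /eqP; rewrite eqr_nat => /eqP.
  done.
- by rewrite size_map size_iota.
- by move=> x /mapP [j _ ->]; exists j.
Qed.

Lemma sum_eqb (r : seq nat) (a : nat) : (\sum_(d <- r) (d == a) = count_mem a r)%N.
Proof. by elim: r => [|y r IH]; rewrite ?big_nil ?big_cons //= IH eq_sym. Qed.

Lemma key_sum N (x : 'I_N -> nat) (cnt : nat -> nat) (K : nat) :
  (0 < K)%N -> (K <= N)%N ->
  (forall d, (0 < d)%N -> (d <= N)%N -> cnt d = \sum_(e < N) (e.+1 == d) * x e)%N ->
  (\sum_(d <- divisors K) d * cnt d = \sum_(e < N | e.+1 %| K) e.+1 * x e)%N.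
Proof.
move=> K0 KN Hc.
have [ud _ md] := divisors_correct K0.
rewrite (@eq_big_seq _ _ _ _ _ _ (fun d => \sum_(e < N) d * ((e.+1 == d) * x e))%N); last first.
  move=> d; rewrite md => dK; rewrite Hc ?big_distrr //.
    by apply: dvdn_gt0 dK.
  by apply: leq_trans (dvdn_leq K0 dK) KN.
rewrite exchange_big /= [RHS]big_mkcond /=; apply: eq_bigr => e _.
rewrite (eq_bigr (fun d => (d == e.+1) * (e.+1 * x e)))%N; last first.
  by move=> d _; case: eqP => [->|ne]; rewrite ?eqxx ?muln0 ?mul1n //;
     case: eqP => // h; case: ne.
rewrite -big_distrl /= sum_eqb count_uniq_mem // md.
by case: (e.+1 %| K)%N; rewrite ?mul1n ?mul0n.
Qed.

Theorem corollary56 (n N : nat) (f g : {mpoly rat[N]}) :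
  (0 < n)%N ->
  sym_deg_le f n -> sym_deg_le g n ->
  (forall mu : seq nat, is_partition mu -> (n <= psize mu)%N ->
     eval_Xi f mu = eval_Xi g mu) ->
  f = g.
Proof.
move=> _ _ _ Hfg.
pose h := f - g.
pose lq : N.-tuple {mpoly rat[N]} :=
  [tuple \sum_(d < N | (d.+1 %| k.+1)%N) (d.+1)%:R *: 'X_d | k < N].
have lqE : forall (v : 'I_N -> rat) k,
    (tnth lq k).@[v] = \sum_(d < N | (d.+1 %| k.+1)%N) (d.+1)%:R * v d.
  move=> v k; rewrite tnth_mktuple raddf_sum /=; apply: eq_bigr => d _.
  by rewrite mevalZ mevalXU.
have H0 : h \mPo lq = 0.
  apply: (@grid_zero _ (fun x => exists j : nat, x = j%:R) nat_seq) => v Hv.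
  have [x Hx] := fin_all_exists Hv.
  pose s := nseq n N.+1 ++ flatten [seq nseq (x d) d.+1 | d <- enum 'I_N].
  pose mu := sort geq s.
  have pmu : is_partition mu.
    rewrite /is_partition /mu sort_sorted; last by move=> a b; exact: leq_total.
    rewrite all_sort all_cat /=; apply/andP; split; first by apply/allP => y /nseqP [->].
    by apply/allP => y /flattenP [t /mapP [d _ ->] /nseqP [-> _]].
  have szmu : (n <= psize mu)%N.
    rewrite /psize /mu (perm_sumn (permEl (perm_sort _ _))) sumn_cat sumn_nseq.
    by apply: leq_trans (leq_addr _ _); rewrite leq_pmull.
  have := Hfg mu pmu szmu; rewrite /eval_Xi => /eqP; rewrite -subr_eq0 -mevalB => /eqP E.
  rewrite comp_mpoly_meval -[RHS]E; apply: meval_eq => k.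
  rewrite lqE /p_at_Xi.
  rewrite [LHS](eq_bigr (fun d : 'I_N => ((d.+1) * x d)%N%:R)); last by move=> d _; rewrite Hx natrM.
  rewrite -!natr_sum; congr (_%:R).
  symmetry; apply: key_sum => //.
  move=> d d0 dN; rewrite /mult /mu.
  have /permEl/permP -> := perm_sort geq s.
  rewrite count_cat count_nseq count_flatten sumnE !big_map /= [index_enum _]unlock.
  rewrite (_ : (N.+1 == d) = false) ?mul0n ?add0n; last first.
    by apply/eqP => e; move: dN; rewrite -e ltnn.
  by apply: eq_bigr => e _; rewrite count_nseq.
have hz : h = 0.
  apply: (@grid_zero _ (fun _ => True)) => [k|y _].
    by have [s [us ss _]] := nat_seq k; exists s.
  pose A : 'M[rat]_N := \matrix_(k, d) (if (d.+1 %| k.+1)%N then (d.+1)%:R else 0).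
  have uA : A \in unitmx.
    rewrite unitmxE unitfE det_trig; last first.
      apply/forallP => i; apply/forallP => j; apply/implyP => ij.
      rewrite mxE; case: ifP => // /(dvdn_leq (ltn0Sn _)); rewrite ltnS => ji.
      by move: ij; rewrite ltnNge ji.
    by apply/prodf_neq0 => i _; rewrite mxE dvdnn pnatr_eq0.
  pose X := invmx A *m (\col_k y k).
  have AX := mulKVmx uA (\col_k y k).
  transitivity (h.@[fun k => (tnth lq k).@[fun d => X d ord0]]).
    apply: meval_eq => k; rewrite lqE.
    have := congr1 (fun M : 'M[rat]_(N, 1) => M k ord0) AX; rewrite !mxE => <-.
    rewrite [RHS]big_mkcond /=; apply: eq_bigr => d _; rewrite mxE.
    by case: ifP => _; rewrite ?mul0r.
  by rewrite -comp_mpoly_meval H0 meval0.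
by apply/eqP; rewrite -subr_eq0; apply/eqP.
Qed.
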